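(* Let $k$ be an algebraically closed field of characteristic $0$, $d\ge3$, $n\ge2$, and let $V_n$ have basis $v_1,\dots,v_n$ with symmetric $d$-linear form $\Theta_d(v_{i_1},\dots,v_{i_d})=1$ if $i_1+\dots+i_d=(d-1)n+1$ and $0$ otherwise. Let $\psi(v_i)=v_{i-1}$ ($v_0=0$), so that the center $\mathrm{Cent}_k(n,d)=k[\psi]$ has basis $1,\psi,\dots,\psi^{n-1}$. Let $\mathbf{G}'=k^\times\times k^{n-2}$, whose elements are written $a=(a_1,\dots,a_{n-1})$. Define $\rho_1(a)=a_1\psi+\dots+a_{n-1}\psi^{n-1}$ and let $\rho_2(a)$ be the $n\times n$ matrix whose $j$-th column ($j=0,\dots,n-1$) is the coordinate vector of $\rho_1(a)^j$ in the basis $1,\psi,\dots,\psi^{n-1}$. Define $m(a,b)\in\mathbf{G}'$ as the second column of $\rho_2(a)\rho_2(b)$ with its first entry deleted. Then $\mathbf{G}'$ is a group with multiplication $m$ and neutral element $e=(1,0,\dots,0)$, and $\mathbf{G}'$ is isomorphic to the group $\mathbf{G}$ of $k$-algebra automorphisms of $\mathrm{Cent}_k(n,d)$.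
   Context: $\mathrm{Cent}_k(n,d)=\{f\in\mathrm{End}_k(V_n):\Theta_d(fu_1,u_2,\dots,u_d)=\Theta_d(u_1,fu_2,\dots,u_d)\ \forall u_i\}$. *)

(* Defs.v *)
From mathcomp Require Import all_boot all_algebra.
Set Implicit Arguments. Unset Strict Implicit. Unset Printing Implicit Defensive.
Import GRing.Theory.
Local Open Scope ring_scope.

Section Defs.
Variable k : fieldType.

(* V_n = 'cV[k]_n; the basis vector v_i (1 <= i <= n) is the column
   vector delta at (0-based) index i-1.  End_k(V_n) = 'M[k]_n acting by *m. *)

(* The symmetric d-linear form Theta_d, i.e. the multilinear extension of
   Theta_d(v_{i_1},...,v_{i_d}) = [i_1 + ... + i_d = (d-1)n+1]
   (1-based indices i_l = j_l + 1). *)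
Definition Theta (n d : nat) (u : 'I_d -> 'cV[k]_n) : k :=
  \sum_(j : {ffun 'I_d -> 'I_n} | (\sum_(l < d) (j l).+1 == (d - 1) * n + 1)%N)
     \prod_(l < d) u l (j l) ord0.

Definition upd (n d : nat) (u : 'I_d -> 'cV[k]_n) (l : 'I_d) (f : 'M[k]_n) :
  'I_d -> 'cV[k]_n := fun i => if i == l then f *m u i else u i.

Definition inCent (n d : nat) (f : 'M[k]_n) : Prop :=
  forall (u : 'I_d -> 'cV[k]_n) (l1 l2 : 'I_d),
    nat_of_ord l1 = 0%N -> nat_of_ord l2 = 1%N ->
    Theta (upd u l1 f) = Theta (upd u l2 f).

(* k-algebra automorphisms of the (unital, multiplication = composition)
   algebra Cent_k(n,d), represented by maps 'M_n -> 'M_n considered on Cent. *)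
Definition is_alg_aut (n d : nat) (s : 'M[k]_n -> 'M[k]_n) : Prop :=
  (forall f, inCent d f -> inCent d (s f)) /\
  (forall f g, inCent d f -> inCent d g -> s (f + g) = s f + s g) /\
  (forall (c : k) f, inCent d f -> s (c *: f) = c *: s f) /\
  (forall f g, inCent d f -> inCent d g -> s (f *m g) = s f *m s g) /\
  s 1%:M = 1%:M /\
  (forall f g, inCent d f -> inCent d g -> s f = s g -> f = g) /\
  (forall g, inCent d g -> exists2 f, inCent d f & s f = g).

Definition psi (n : nat) : 'M[k]_n :=
  \matrix_(i < n, j < n) (nat_of_ord j == (nat_of_ord i).+1)%:R.

Definition psi_basis (n : nat) : 'M[k]_(n, n * n) :=
  \matrix_(i < n) mxvec (psi n ^+ i).

Definition psi_coord (n : nat) (M : 'M[k]_n) : 'rV[k]_n :=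
  mxvec M *m pinvmx (psi_basis n).

(* G' = k^x * k^{n-2}, a = (a_1, ..., a_{n-1}) stored 0-based in 'rV_(n-1) *)
Definition inGp (n : nat) (a : 'rV[k]_(n.-1)) : bool :=
  [forall i : 'I_(n.-1), (nat_of_ord i == 0%N) ==> (a ord0 i != 0)].

Definition rho1 (n : nat) (a : 'rV[k]_(n.-1)) : 'M[k]_n :=
  \sum_(i < n.-1) a ord0 i *: psi n ^+ (nat_of_ord i).+1.

Definition rho2 (n : nat) (a : 'rV[k]_(n.-1)) : 'M[k]_n :=
  \matrix_(i < n, j < n) psi_coord (rho1 a ^+ nat_of_ord j) ord0 i.

Lemma succ_ord_proof (n : nat) (i : 'I_(n.-1)) : ((nat_of_ord i).+1 < n)%N.
Proof. by case: n i => [[]|n] //= i; rewrite ltnS. Qed.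
Definition succ_ord (n : nat) (i : 'I_(n.-1)) : 'I_n := Ordinal (succ_ord_proof i).

Lemma one_ord_proof (n : nat) (i : 'I_(n.-1)) : (1 < n)%N.
Proof. by case: n i => [[]|[[]|n]] //= []. Qed.
Definition one_ord (n : nat) (i : 'I_(n.-1)) : 'I_n := Ordinal (one_ord_proof i).

Definition mG (n : nat) (a b : 'rV[k]_(n.-1)) : 'rV[k]_(n.-1) :=
  \row_(i < n.-1) (rho2 a *m rho2 b) (succ_ord i) (one_ord i).

Definition eG (n : nat) : 'rV[k]_(n.-1) :=
  \row_(i < n.-1) (nat_of_ord i == 0%N)%:R.

End Defs.

(* Main.v *)
Require Import Defs.
From mathcomp Require Import all_boot all_algebra all_fingroup.
From mathcomp Require Import zify ring.
Set Implicit Arguments. Unset Strict Implicit. Unset Printing Implicit Defensive.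
Import GRing.Theory.
Local Open Scope ring_scope.

Section Part.
Variable k : fieldType.
Variable n' : nat.
Local Notation N := n'.+2.
Local Notation M := 'M[k]_N.
Local Notation ps := (psi k N).

Lemma sum_ind (g : 'I_N -> k) (m : nat) :
  \sum_(s < N) ((nat_of_ord s == m)%:R * g s) = if (m < N)%N then g (inord m) else 0.
Proof.
rewrite (bigID (fun s : 'I_N => nat_of_ord s == m)) /=.
rewrite [X in _ + X]big1 ?addr0; last by move=> i /negbTE ->; rewrite mul0r.
rewrite (eq_bigr (fun s => g s)); last by move=> i ->; rewrite mul1r.
case: ltnP => Hm.
  rewrite (big_pred1 (inord m)) // => i; apply/eqP/eqP => [<-|->]; last by rewrite inordK.
  by apply: val_inj; rewrite /= inordK.
by rewrite big_pred0 // => i; apply/negbTE; rewrite neq_ltn (leq_trans (ltn_ord i) Hm).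
Qed.

Lemma sum_ind_gen (n0 : nat) (g : nat -> k) (m : nat) :
  \sum_(s < n0) ((nat_of_ord s == m)%:R * g s) = if (m < n0)%N then g m else 0.
Proof.
rewrite -(@big_ord1_eq k 0 +%R (fun j => g j) m n0) [RHS]big_mkcond; apply: eq_bigr => j _.
by case: (_ == _ :> nat); rewrite ?mul1r ?mul0r.
Qed.

Lemma psiE (r c : 'I_N) : ps r c = (nat_of_ord c == (nat_of_ord r).+1)%:R.
Proof. by rewrite mxE. Qed.

Lemma psiXE (i : nat) (r c : 'I_N) : (ps ^+ i) r c = (nat_of_ord c == (r + i)%N)%:R.
Proof.
elim: i r c => [|i IH] r c.
  by rewrite expr0 mxE addn0 eq_sym.
rewrite exprSr -mulmxE mxE.
rewrite (eq_bigr (fun s => (nat_of_ord s == (r + i)%N)%:R * (nat_of_ord c == s.+1)%:R)); last first.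
  by move=> s _; rewrite IH psiE.
rewrite sum_ind; case: ltnP => H.
  by rewrite inordK // addnS.
suff -> : (nat_of_ord c == (r + i.+1)%N) = false by [].
by apply/negbTE/eqP => E; have := ltn_ord c; lia.
Qed.

Definition Com (f : M) := GRing.comm ps f.
Definition Tm (x : 'rV[k]_N) : M := \sum_(i < N) x 0 i *: ps ^+ i.

Lemma TmE x (r c : 'I_N) : Tm x r c = \sum_(i < N) x 0 i * (nat_of_ord c == (r + i)%N)%:R.
Proof.
rewrite /Tm summxE; apply: eq_bigr => i _; by rewrite mxE psiXE.
Qed.

Lemma Tm0E x (c : 'I_N) : Tm x ord0 c = x 0 c.
Proof.
rewrite TmE (eq_bigr (fun i : 'I_N => (nat_of_ord i == c)%:R * x 0 i)).
  by rewrite sum_ind ltn_ord inord_val.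
by move=> i _; rewrite mulrC add0n eq_sym.
Qed.

Lemma Com_psiX i : Com (ps ^+ i).
Proof. exact/commrX/commr_refl. Qed.

Lemma ComD f g : Com f -> Com g -> Com (f + g).
Proof. exact: commrD. Qed.
Lemma ComM f g : Com f -> Com g -> Com (f * g).
Proof. exact: commrM. Qed.
Lemma ComZ c f : Com f -> Com (c *: f).
Proof. by rewrite /Com /GRing.comm => H; rewrite -scalerAr H scalerAl. Qed.
Lemma ComB f g : Com f -> Com g -> Com (f - g).
Proof. exact: commrB. Qed.
Lemma Com_sum (I : Type) (s : seq I) (P : pred I) (F : I -> M) :
  (forall i, P i -> Com (F i)) -> Com (\sum_(i <- s | P i) F i).
Proof. exact: commr_sum. Qed.
Lemma Com1 : Com 1. Proof. exact: commr1. Qed.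
Lemma ComX f i : Com f -> Com (f ^+ i). Proof. exact: commrX. Qed.

Lemma Com_Tm x : Com (Tm x).
Proof. by apply: Com_sum => i _; apply/ComZ/Com_psiX. Qed.

Lemma Com_row0 g : Com g -> (forall c, g ord0 c = 0) -> g = 0.
Proof.
move=> Hc H0.
have H : forall r, (r < N)%N -> forall c, g (inord r) c = 0.
  elim=> [|r IH] Hr c; first by have -> : inord 0 = (0 : 'I_N) by apply: val_inj; rewrite /= inordK.
  have E1 : (ps * g) (inord r) c = g (inord r.+1) c.
    rewrite -mulmxE mxE (eq_bigr (fun s : 'I_N => (nat_of_ord s == r.+1)%:R * g s c)).
      by rewrite sum_ind Hr.
    by move=> s _; rewrite psiE inordK // ltnW.
  rewrite -E1 Hc -mulmxE mxE big1 // => s _.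
  by rewrite IH ?mul0r // ltnW.
by apply/matrixP => i j; rewrite mxE -(inord_val i) H.
Qed.

Lemma ComT f : Com f -> f = Tm (row ord0 f).
Proof.
move=> Hf; apply/eqP; rewrite -subr_eq0; apply/eqP.
apply: Com_row0; first by apply: ComB => //; apply: Com_Tm.
by move=> c; rewrite !mxE Tm0E mxE subrr.
Qed.

Lemma psi_coordT x : psi_coord (Tm x) = x.
Proof.
have Hv : mxvec (Tm x) = x *m psi_basis k N.
  rewrite mulmx_sum_row /Tm linear_sum; apply: eq_bigr => i _.
  by rewrite linearZ rowK.
set B' : 'M[k]_(N * N, N) := \matrix_(a, c) (a == mxvec_index 0 c)%:R.
have HB : forall y : 'rV[k]_N, y *m psi_basis k N *m B' = y.
  move=> y; rewrite -mulmxA.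
  have -> : psi_basis k N *m B' = 1%:M.
    apply/matrixP => i c; rewrite !mxE (bigD1 (mxvec_index 0 c)) //= big1 ?addr0.
      by rewrite /B' /psi_basis !mxE eqxx mulr1 mxvecE psiXE add0n eq_sym.
    by move=> a /negbTE Ha; rewrite /B' !mxE Ha mulr0.
  by rewrite mulmx1.
have E := mulmxKpV (submxMl x (psi_basis k N)).
by rewrite /psi_coord Hv -[LHS]HB E HB.
Qed.

Lemma psi_coord_Com f : Com f -> psi_coord f = row ord0 f.
Proof. by move=> Hf; rewrite {1}(ComT Hf) psi_coordT. Qed.


Local Notation R a := (@rho1 k N a).
Local Notation Rv := ('rV[k]_(n'.+1)).

Lemma sum_indZ (G : 'I_N -> M) (m : nat) :
  \sum_(s < N) ((nat_of_ord s == m)%:R *: G s) = if (m < N)%N then G (inord m) else 0.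
Proof.
rewrite (bigID (fun s : 'I_N => nat_of_ord s == m)) /=.
rewrite [X in _ + X]big1 ?addr0; last by move=> i /negbTE ->; rewrite scale0r.
rewrite (eq_bigr (fun s => G s)); last by move=> i ->; rewrite scale1r.
case: ltnP => Hm.
  rewrite (big_pred1 (inord m)) // => i; apply/eqP/eqP => [<-|->]; last by rewrite inordK.
  by apply: val_inj; rewrite /= inordK.
by rewrite big_pred0 // => i; apply/negbTE; apply/eqP => E; have := ltn_ord i; lia.
Qed.

Lemma rho1E (a : Rv) (r c : 'I_N) :
  R a r c = \sum_(i < n'.+1) a 0 i * (nat_of_ord c == (r + i.+1)%N)%:R.
Proof. rewrite /rho1 summxE; apply: eq_bigr => i _; by rewrite mxE psiXE. Qed.

Lemma Com_rho1 (a : Rv) : Com (R a).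
Proof. by apply: Com_sum => i _; apply/ComZ/Com_psiX. Qed.

Lemma rho1_low (a : Rv) (r c : 'I_N) : (c <= r)%N -> R a r c = 0.
Proof.
move=> H; rewrite rho1E big1 // => i _.
suff -> : (nat_of_ord c == (r + i.+1)%N) = false by rewrite mulr0.
by apply/negbTE/eqP => E; lia.
Qed.

Lemma rho1_diag (a : Rv) (r c : 'I_N) : nat_of_ord c = (nat_of_ord r).+1 -> R a r c = a 0 0.
Proof.
move=> H; rewrite rho1E (bigD1 ord0) //= big1 ?addr0.
  by rewrite H addn1 eqxx mulr1.
move=> i Hi; suff -> : (nat_of_ord c == (r + i.+1)%N) = false by rewrite mulr0.
apply/negbTE/eqP => E; move: Hi; rewrite -val_eqE /=; lia.
Qed.

Lemma rho1_row0 (a : Rv) (i : 'I_n'.+1) : R a ord0 (@succ_ord N i) = a 0 i.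
Proof.
rewrite rho1E (bigD1 i) //= big1 ?addr0.
  by rewrite add0n eqxx mulr1.
move=> j Hj; suff -> : ((i.+1 : nat) == (0 + j.+1)%N) = false by rewrite mulr0.
by apply/negbTE; move: Hj; rewrite -!val_eqE /= add0n eqSS eq_sym.
Qed.

Lemma rho1_inj (a b : Rv) : R a = R b -> a = b.
Proof.
move=> E; apply/matrixP => i j; rewrite (ord1 i) -!rho1_row0; by rewrite E.
Qed.

Lemma tri (a : Rv) j : (forall r : 'I_N, (r < j)%N -> (R a ^+ j) ord0 r = 0) /\
  (forall r : 'I_N, nat_of_ord r = j -> (R a ^+ j) ord0 r = a 0 0 ^+ j).
Proof.
elim: j => [|j [IH1 IH2]].
  by split=> // r Hr; rewrite expr0 mxE; case: r Hr => [[]] //.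
split.
  move=> r Hr; rewrite exprSr -mulmxE mxE big1 // => s _.
  case: (ltnP s j) => Hs; first by rewrite IH1 // mul0r.
  by rewrite rho1_low ?mulr0 //; apply: leq_trans Hs; rewrite -ltnS.
move=> r Hr.
have Hj : (j < N)%N by rewrite -Hr ltnW.
rewrite exprSr -mulmxE mxE (bigD1 (inord j)) //= big1 ?addr0.
  by rewrite IH2 ?inordK // rho1_diag ?inordK // exprSr.
move=> s Hs; case: (ltnP s j) => Hs'; first by rewrite IH1 // mul0r.
rewrite rho1_low ?mulr0 // Hr.
have : nat_of_ord s != j by move: Hs; apply: contra => /eqP E; apply/eqP/val_inj; rewrite /= inordK.
by move=> H; rewrite ltn_neqAle eq_sym H.
Qed.

Lemma rho1_nil (a : Rv) : R a ^+ N = 0.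
Proof.
apply: Com_row0; first exact/ComX/Com_rho1.
by move=> c; rewrite (proj1 (tri a N)).
Qed.


Definition Pc (f : M) : {poly k} := \poly_(i < N) psi_coord f 0 (inord i).
Definition Phi (a : Rv) (f : M) : M := horner_mx (R a) (Pc f).

Lemma hornerP (X : M) (c : nat -> k) :
  horner_mx X (\poly_(i < N) c i) = \sum_(i < N) c i *: X ^+ i.
Proof.
rewrite poly_def linear_sum; apply: eq_bigr => i _.
by rewrite linearZ /= rmorphXn /= horner_mx_X.
Qed.

Lemma PhiE a f : Phi a f = \sum_(i < N) psi_coord f 0 i *: R a ^+ i.
Proof. rewrite /Phi/Pc hornerP; apply: eq_bigr => i _; by rewrite inord_val. Qed.

Lemma PhiE_Com a f : Com f -> Phi a f = \sum_(i < N) f ord0 i *: R a ^+ i.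
Proof.
move=> Hf; rewrite PhiE psi_coord_Com //; apply: eq_bigr => i _; by rewrite mxE.
Qed.

Lemma psi_coordD (f g : M) : psi_coord (f + g) = psi_coord f + psi_coord g.
Proof. by rewrite /psi_coord linearD mulmxDl. Qed.
Lemma psi_coordZ c (f : M) : psi_coord (c *: f) = c *: psi_coord f.
Proof. by rewrite /psi_coord linearZ scalemxAl. Qed.

Lemma PhiD a f g : Phi a (f + g) = Phi a f + Phi a g.
Proof.
rewrite !PhiE -big_split; apply: eq_bigr => i _; by rewrite psi_coordD mxE scalerDl.
Qed.
Lemma PhiZ a c f : Phi a (c *: f) = c *: Phi a f.
Proof.
rewrite !PhiE scaler_sumr; apply: eq_bigr => i _; by rewrite psi_coordZ mxE scalerA.
Qed.

Lemma Com_Phi a f : Com (Phi a f).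
Proof. by rewrite PhiE; apply: Com_sum => i _; apply/ComZ/ComX/Com_rho1. Qed.

Lemma Phi1 a : Phi a 1 = 1.
Proof.
rewrite PhiE_Com; last exact: Com1.
rewrite (eq_bigr (fun i : 'I_N => (nat_of_ord i == 0%N)%:R *: R a ^+ i)).
  by rewrite sum_indZ /= inordK // expr0.
by move=> i _; rewrite mxE eq_sym.
Qed.

Lemma Phi_psi a : Phi a ps = R a.
Proof.
rewrite PhiE_Com; last exact: (Com_psiX 1).
rewrite (eq_bigr (fun i : 'I_N => (nat_of_ord i == 1%N)%:R *: R a ^+ i)).
  by rewrite sum_indZ /= inordK // expr1.
by move=> i _; rewrite psiE.
Qed.

Lemma Pc_Com f : Com f -> horner_mx ps (Pc f) = f.
Proof.
move=> Hf; rewrite hornerP {2}(ComT Hf) /Tm; apply: eq_bigr => i _.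
by rewrite psi_coord_Com // inord_val.
Qed.

Lemma horner_psi0 (a : Rv) q : horner_mx ps q = 0 -> horner_mx (R a) q = 0.
Proof.
move=> Hq.
have Hc : forall i, (i < N)%N -> q`_i = 0.
  move=> i Hi.
  have E : horner_mx ps q = \sum_(j < size q) q`_j *: ps ^+ j.
    rewrite -[in LHS](coefK q) poly_def linear_sum; apply: eq_bigr => j _.
    by rewrite linearZ /= rmorphXn /= horner_mx_X.
  have := congr1 (fun A : M => A ord0 (inord i)) E; rewrite Hq /= mxE summxE.
  rewrite (eq_bigr (fun j : 'I_(size q) => (nat_of_ord j == i)%:R * q`_j)); last first.
    move=> j _; rewrite mxE psiXE inordK // add0n.
    by rewrite mulrC eq_sym.
  rewrite sum_ind_gen; case: ltnP => // H _; by rewrite nth_default.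
have Ht : take_poly N q = 0.
  by apply/polyP => i; rewrite coef_take_poly coef0; case: ifP => // /Hc.
rewrite -(poly_take_drop N q) Ht add0r rmorphM /= rmorphXn /= horner_mx_X.
by rewrite rho1_nil mulr0.
Qed.


Lemma PhiM a f g : Com f -> Com g -> Phi a (f * g) = Phi a f * Phi a g.
Proof.
move=> Hf Hg.
have H : horner_mx ps (Pc (f * g) - Pc f * Pc g) = 0.
  by rewrite rmorphB rmorphM /= !Pc_Com ?subrr //; apply: ComM.
have := horner_psi0 a H; rewrite rmorphB rmorphM /= => /eqP; rewrite subr_eq0 => /eqP.
by rewrite /Phi.
Qed.

Lemma hom_det (t : M -> M) :
  (forall f g, Com f -> Com g -> t (f + g) = t f + t g) ->
  (forall c f, Com f -> t (c *: f) = c *: t f) ->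
  (forall f g, Com f -> Com g -> t (f * g) = t f * t g) ->
  t 1 = 1 ->
  forall f, Com f -> t f = \sum_(i < N) f ord0 i *: t ps ^+ i.
Proof.
move=> Hd Hz Hm H1 f Hf.
have t0 : t 0 = 0 by rewrite -(scale0r (0 : M)) Hz ?scale0r //; apply: commr0.
have tX : forall i, t (ps ^+ i) = t ps ^+ i.
  elim=> [|i IH]; first by rewrite !expr0.
  by rewrite !exprS Hm; [rewrite IH | exact: commr_refl | exact: Com_psiX].
have tsum : forall (s : seq 'I_N) (F : 'I_N -> M), (forall i, Com (F i)) ->
    t (\sum_(i <- s) F i) = \sum_(i <- s) t (F i).
  move=> s F HF; elim: s => [|x s IH]; first by rewrite !big_nil.
  by rewrite !big_cons Hd ?IH //; apply: Com_sum.
rewrite {1}(ComT Hf) /Tm tsum; last by move=> i; apply/ComZ/Com_psiX.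
by apply: eq_bigr => i _; rewrite Hz ?tX ?mxE //; apply: Com_psiX.
Qed.

Lemma Phi_comp a b f : Com f -> Phi a (Phi b f) = \sum_(i < N) f ord0 i *: Phi a (R b) ^+ i.
Proof.
move=> Hf; rewrite (hom_det (t := fun f => Phi a (Phi b f))) //= ?Phi_psi //.
- by move=> f1 g1 _ _; rewrite !PhiD.
- by move=> c f1 _; rewrite !PhiZ.
- by move=> f1 g1 H1 H2; rewrite (PhiM b) // PhiM //; apply: Com_Phi.
- by rewrite !Phi1.
Qed.

Lemma rho1_of (g : M) : Com g -> g ord0 ord0 = 0 -> R (\row_i g ord0 (@succ_ord N i)) = g.
Proof.
move=> Hg H0; rewrite [RHS](ComT Hg) /Tm big_ord_recl mxE H0 scale0r add0r.
rewrite /rho1; apply: eq_bigr => i _; rewrite !mxE lift0.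
by have -> : @succ_ord N i = lift ord0 i by apply: val_inj.
Qed.

Lemma inGpE (a : Rv) : @inGp k N a = (a ord0 ord0 != 0).
Proof.
apply/forallP/idP => [H | H i]; first exact: (implyP (H ord0)).
apply/implyP => /eqP Hi; by have -> : i = ord0 by apply: val_inj.
Qed.

Lemma mG_entry (a b : Rv) r i : @mG k N a b r i = Phi a (R b) ord0 (@succ_ord N i).
Proof.
rewrite /mG mxE mxE PhiE_Com; last exact: Com_rho1.
rewrite summxE; apply: eq_bigr => j _; rewrite [@rho2 k N a _ _]mxE [@rho2 k N b _ _]mxE !psi_coord_Com; [|apply/ComX/Com_rho1|apply/ComX/Com_rho1].
by rewrite !mxE /= expr1 mulrC.
Qed.

Lemma Phi_rho1_00 (a b : Rv) : Phi a (R b) ord0 ord0 = 0.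
Proof.
rewrite PhiE_Com; last exact: Com_rho1.
rewrite summxE big1 // => j _; rewrite mxE.
case: (posnP j) => Hj; first by rewrite rho1_low ?Hj // mul0r.
by rewrite (proj1 (tri a j)) ?mulr0.
Qed.

Lemma rho1_mG (a b : Rv) : R (@mG k N a b) = Phi a (R b).
Proof.
rewrite -[RHS](rho1_of (Com_Phi a (R b)) (Phi_rho1_00 a b)); apply: f_equal.
by apply/matrixP => i j; rewrite mG_entry mxE.
Qed.

Lemma Phi_mG (a b : Rv) f : Com f -> Phi (@mG k N a b) f = Phi a (Phi b f).
Proof. by move=> Hf; rewrite Phi_comp // PhiE_Com // rho1_mG. Qed.

Lemma rho1_e : R (eG k N) = ps.
Proof.
rewrite /rho1 big_ord_recl big1 ?addr0.
  by rewrite mxE /= scale1r expr1.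
by move=> i _; rewrite mxE /= scale0r.
Qed.

Lemma Phi_e f : Com f -> Phi (eG k N) f = f.
Proof.
move=> Hf; rewrite PhiE_Com // rho1_e [RHS](ComT Hf) /Tm; apply: eq_bigr => i _.
by rewrite mxE.
Qed.

Lemma mG_assoc (a b c : Rv) : @mG k N (@mG k N a b) c = @mG k N a (@mG k N b c).
Proof.
apply: rho1_inj; rewrite !rho1_mG Phi_mG; last exact: Com_rho1.
by [].
Qed.

Lemma mG_e_l (a : Rv) : @mG k N (eG k N) a = a.
Proof. by apply: rho1_inj; rewrite rho1_mG Phi_e //; apply: Com_rho1. Qed.

Lemma mG_e_r (a : Rv) : @mG k N a (eG k N) = a.
Proof. by apply: rho1_inj; rewrite rho1_mG rho1_e Phi_psi. Qed.


Lemma mG_00 (a b : Rv) : @mG k N a b ord0 ord0 = a ord0 ord0 * b ord0 ord0.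
Proof.
rewrite mG_entry PhiE_Com; last exact: Com_rho1.
rewrite summxE (bigD1 (@succ_ord N ord0)) //= big1 ?addr0.
  rewrite mxE rho1_row0 (proj2 (tri a 1)) // expr1 mulrC.
  by [].
move=> j Hj; rewrite mxE.
case: (posnP j) => Hj0; first by rewrite rho1_low ?Hj0 // mul0r.
rewrite (proj1 (tri a j)) ?mulr0 //=.
by move: Hj; rewrite -val_eqE /=; case: (nat_of_ord j) Hj0 => [|[|]].
Qed.

Lemma mG_in (a b : Rv) : @inGp k N a -> @inGp k N b -> @inGp k N (@mG k N a b).
Proof. by rewrite !inGpE mG_00 => Ha Hb; rewrite mulf_neq0. Qed.

Lemma e_in : @inGp k N (eG k N).
Proof. by rewrite inGpE mxE /= oner_neq0. Qed.


Lemma mG_inv_r (a : Rv) : @inGp k N a -> exists b : Rv, @inGp k N b /\ @mG k N a b = eG k N.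
Proof.
rewrite inGpE => Ha.
set A : M := \matrix_(j, r) (R a ^+ j) ord0 r.
have HA : A \in unitmx.
  rewrite unitmxE -det_tr det_trig; last first.
    by apply/is_trig_mxP => i j Hij; rewrite !mxE (proj1 (tri a j)).
  rewrite unitfE; apply/prodf_neq0 => i _; rewrite !mxE (proj2 (tri a i)) //.
  exact: expf_neq0.
set e1 : 'rV[k]_N := delta_mx 0 (inord 1).
have [y Hy] : {y : 'rV[k]_N | y *m A = e1}.
  by exists (e1 *m invmx A); rewrite -mulmxA mulVmx // mulmx1.
have HyA : forall r, (y *m A) 0 r = \sum_j y 0 j * (R a ^+ j) ord0 r.
  by move=> r; rewrite [LHS]mxE; apply: eq_bigr => j _; rewrite /A mxE.
set g := \sum_(j < N) y 0 j *: R a ^+ j.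
have Hg0 : forall r, g ord0 r = (y *m A) 0 r.
  by move=> r; rewrite HyA summxE; apply: eq_bigr => j _; rewrite mxE.
have Hgps : g = ps.
  apply/eqP; rewrite -subr_eq0; apply/eqP; apply: Com_row0.
    apply: ComB; last exact: (Com_psiX 1).
    by apply: Com_sum => j _; apply/ComZ/ComX/Com_rho1.
  move=> c; rewrite !mxE Hg0 Hy !mxE /=.
  have -> : (c == inord 1) = (nat_of_ord c == 1%N) by rewrite -val_eqE /= inordK.
  by rewrite subrr.
have y0 : y 0 ord0 = 0.
  have := HyA ord0; rewrite Hy (bigD1 ord0) //= big1 ?addr0.
    rewrite expr0 !mxE /= mulr1 => <-.
    have -> : (ord0 == inord 1 :> 'I_N) = false by rewrite -val_eqE /= inordK.
    by [].
  move=> j Hj; rewrite (proj1 (tri a j)) ?mulr0 //.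
  by rewrite lt0n.
have y1 : y 0 (inord 1) * a 0 0 = 1.
  have := HyA (inord 1); rewrite Hy (bigD1 (inord 1)) //= big1 ?addr0.
    rewrite [in R a ^+ _]inordK // (proj2 (tri a 1)) ?inordK // expr1 !mxE !eqxx => <-.
    by [].
  move=> j Hj; case: (posnP j) => Hj0.
    have -> : j = ord0 by apply: val_inj.
    by rewrite y0 mul0r.
  rewrite (proj1 (tri a j)) ?mulr0 // inordK //.
  move: Hj; rewrite -val_eqE /= inordK //; case: (nat_of_ord j) Hj0 => [|[|]] //.
set b : Rv := \row_i y 0 (@succ_ord N i).
have Rb : R b = Tm y.
  rewrite -[RHS](rho1_of (Com_Tm y)); last by rewrite Tm0E.
  by apply: f_equal; apply/matrixP => i j; rewrite !mxE Tm0E.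
exists b; split.
  rewrite inGpE mxE; apply/eqP => H.
  have E : @succ_ord N ord0 = inord 1 by apply: val_inj; rewrite /= inordK.
  by move: y1; rewrite -E H mul0r => /eqP; rewrite eq_sym oner_eq0.
apply: rho1_inj; rewrite rho1_mG rho1_e Rb PhiE_Com; last exact: Com_Tm.
rewrite -Hgps; apply: eq_bigr => j _; by rewrite Tm0E.
Qed.


Lemma sum_constN (m c : nat) : (\sum_(i < m) c)%N = (m * c)%N.
Proof. elim: m => [|m IH]; first by rewrite big_ord0. by rewrite big_ord_recr /= IH mulSn addnC. Qed.

Variable d' : nat.
Local Notation D := d'.+3.
Local Notation CV := ('cV[k]_N).

Definition ev (x y : CV) (u : 'I_D -> CV) : 'I_D -> CV :=
  fun m => if nat_of_ord m == 0%N then x else if nat_of_ord m == 1%N then y else u m.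
Definition l2 (m : 'I_d'.+1) : 'I_D := lift ord0 (lift ord0 m).
Definition Rest (u : 'I_D -> CV) (j : {ffun 'I_D -> 'I_N}) : k :=
  \prod_(m < d'.+1) u (l2 m) (j (l2 m)) ord0.
Definition ev1 : 'I_D := lift ord0 ord0.
Definition ee (a : 'I_N) : CV := delta_mx a 0.
Definition H (u : 'I_D -> CV) (a b : 'I_N) : k := Theta (ev (ee a) (ee b) u).
Definition Hm (u : 'I_D -> CV) : M := \matrix_(a, b) H u a b.

Lemma eeE a i : ee a i 0 = (i == a)%:R.
Proof. by rewrite mxE andbT. Qed.

Lemma prod_split x y u (j : {ffun 'I_D -> 'I_N}) :
  \prod_(m < D) ev x y u m (j m) ord0 = x (j ord0) ord0 * (y (j ev1) ord0 * Rest u j).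
Proof. by rewrite big_ord_recl big_ord_recl. Qed.

Lemma sum_split (j : {ffun 'I_D -> 'I_N}) :
  (\sum_(m < D) (j m).+1)%N = ((j ord0).+1 + ((j ev1).+1 + \sum_(m < d'.+1) (j (l2 m)).+1))%N.
Proof. by rewrite big_ord_recl big_ord_recl. Qed.

Lemma Theta_ext (w w' : 'I_D -> CV) : (forall m, w m = w' m) -> Theta w = Theta w'.
Proof. by move=> E; rewrite /Theta; apply: eq_bigr => j _; apply: eq_bigr => m _; rewrite E. Qed.

Lemma vec_ee (z : CV) i : z i 0 = \sum_a z a 0 * ee a i 0.
Proof.
rewrite (bigD1 i) //= big1 ?addr0; first by rewrite eeE eqxx mulr1.
by move=> a Ha; rewrite eeE eq_sym (negbTE Ha) mulr0.
Qed.

Lemma Theta_bil x y u : Theta (ev x y u) = \sum_a \sum_b x a 0 * y b 0 * H u a b.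
Proof.
rewrite /H /Theta.
rewrite (eq_bigr (fun j : {ffun 'I_D -> 'I_N} => \sum_a \sum_b x a 0 * y b 0 * \prod_(l < D) ev (ee a) (ee b) u l (j l) ord0)); last first.
  move=> j _; rewrite prod_split (vec_ee x) mulr_suml; apply: eq_bigr => a _.
  rewrite (vec_ee y) mulr_suml mulr_sumr; apply: eq_bigr => b _.
  rewrite prod_split; ring.
rewrite exchange_big; apply: eq_bigr => a _.
rewrite exchange_big; apply: eq_bigr => b _.
by rewrite mulr_sumr.
Qed.

Lemma Theta_mx x y u : Theta (ev x y u) = (x^T *m Hm u *m y) 0 0.
Proof.
rewrite Theta_bil mxE exchange_big /=; apply: eq_bigr => b _.
rewrite mxE mulr_suml; apply: eq_bigr => a _; rewrite !mxE; ring.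
Qed.


Lemma upd_ev0 u (f : M) (l1 l2 : 'I_D) : nat_of_ord l1 = 0%N -> nat_of_ord l2 = 1%N ->
  forall m, upd u l1 f m = ev (f *m u l1) (u l2) u m.
Proof.
move=> H1 H2 m.
have -> : l1 = ord0 by apply: val_inj.
have -> : l2 = ev1 by apply: val_inj.
rewrite /upd /ev; case: eqP => [->|Hm] //.
case: eqP => [E|_]; first by case: Hm; apply: val_inj.
by case: eqP => [E|//]; congr u; apply: val_inj.
Qed.

Lemma upd_ev1 u (f : M) (l1 l2 : 'I_D) : nat_of_ord l1 = 0%N -> nat_of_ord l2 = 1%N ->
  forall m, upd u l2 f m = ev (u l1) (f *m u l2) u m.
Proof.
move=> H1 H2 m.
have -> : l1 = ord0 by apply: val_inj.
have -> : l2 = ev1 by apply: val_inj.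
rewrite /upd /ev; case: eqP => [->|Hm] //.
case: eqP => [E|_]; first by congr u; apply: val_inj.
by case: eqP => [E|//]; case: Hm; apply: val_inj.
Qed.

Lemma ext_entry (A : M) p q : ((ee p)^T *m A *m ee q) 0 0 = A p q.
Proof. by rewrite /ee trmx_delta -rowE -colE !mxE. Qed.

Lemma Cent_of (f : M) : (forall u, f^T *m Hm u = Hm u *m f) -> inCent D f.
Proof.
move=> Hf u l1 l2 H1 H2.
rewrite (Theta_ext (upd_ev0 u f H1 H2)) (Theta_ext (upd_ev1 u f H1 H2)) !Theta_mx.
by rewrite trmx_mul -(mulmxA _ f^T) Hf !mulmxA.
Qed.

Lemma Cent_to (f : M) u : inCent D f -> f^T *m Hm u = Hm u *m f.
Proof.
move=> Hf; apply/matrixP => p q.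
set u' := fun m : 'I_D => if nat_of_ord m == 0%N then ee p else if nat_of_ord m == 1%N then ee q else u m.
have EH : Hm u' = Hm u.
  apply/matrixP => a b; rewrite !mxE /H; apply: Theta_ext => m.
  by rewrite /ev /u'; case: (nat_of_ord m == 0%N); case: (nat_of_ord m == 1%N).
have E0 : nat_of_ord (ord0 : 'I_D) = 0%N by [].
have E1 : nat_of_ord ev1 = 1%N by [].
have := Hf u' ord0 ev1 E0 E1.
rewrite (Theta_ext (upd_ev0 u' f E0 E1)) (Theta_ext (upd_ev1 u' f E0 E1)) !Theta_mx EH.
rewrite /u' /= trmx_mul => E; rewrite -ext_entry -[RHS]ext_entry !mulmxA.
by rewrite !mulmxA in E.
Qed.


Lemma HE u a b : H u a b = \sum_(j : {ffun 'I_D -> 'I_N} | (\sum_(l < D) (j l).+1 == (D - 1) * N + 1)%N)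
   ((j ord0 == a)%:R * ((j ev1 == b)%:R * Rest u j)).
Proof. by rewrite /H /Theta; apply: eq_bigr => j _; rewrite prod_split !eeE. Qed.

Lemma rest_bound (j : {ffun 'I_D -> 'I_N}) : (\sum_(m < d'.+1) (j (l2 m)).+1 <= d'.+1 * N)%N.
Proof. by rewrite -sum_constN; apply: leq_sum => m _; exact: ltn_ord. Qed.

Lemma CE : ((D - 1) * N + 1 = N + (N + d' * N) + 1)%N.
Proof. by rewrite subSS subn0 !mulSn. Qed.

Lemma H_zero u (a b : 'I_N) : ((a + b).+1 < N)%N -> H u a b = 0.
Proof.
move=> Hab; rewrite HE big1 // => j Hc.
case: eqP => Ha; last by rewrite mul0r.
case: eqP => Hb; last by rewrite mul0r mulr0.
exfalso; move: Hc; rewrite sum_split Ha Hb CE => /eqP.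
have := rest_bound j; rewrite mulSn.
set S := (\sum_(m < d'.+1) _)%N; set P := (d' * N)%N; lia.
Qed.

Lemma tperm_eq (T : finType) (a a' x : T) : (tperm a a' x == a) = (x == a').
Proof.
apply/eqP/eqP => [E|->]; last exact: tpermR.
by rewrite -(tpermK a a' x) E tpermL.
Qed.

Lemma H_shift u (a b a' b' : 'I_N) : (a + b = a' + b')%N -> H u a b = H u a' b'.
Proof.
move=> Hs; rewrite !HE big_mkcond [RHS]big_mkcond /=.
pose z := fun j : {ffun 'I_D -> 'I_N} => [ffun m => if nat_of_ord m == 0%N then tperm a a' (j m)
   else if nat_of_ord m == 1%N then tperm b b' (j m) else j m].
have zK : involutive z.
  move=> j; apply/ffunP => m; rewrite !ffunE.
  by case: (nat_of_ord m == 0%N); [rewrite tpermK | case: (nat_of_ord m == 1%N); rewrite ?tpermK].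
rewrite (reindex_inj (inv_inj zK)) /=; apply: eq_bigr => j _.
have R1 : Rest u (z j) = Rest u j.
  by rewrite /Rest; apply: eq_bigr => m _; rewrite /l2 ffunE !lift0.
rewrite R1 !ffunE /= tperm_eq tperm_eq.
have [H0|H0] := boolP (j ord0 == a'); last by rewrite /= !mul0r; case: ifP; case: ifP.
have [H1|H1] := boolP (j ev1 == b'); last by rewrite /= !mul0r !mulr0; case: ifP; case: ifP.
congr (if _ then _ else _).
rewrite !sum_split !ffunE /= (eqP H0) (eqP H1) !tpermR.
have -> : (\sum_(m < d'.+1) (z j (l2 m)).+1 = \sum_(m < d'.+1) (j (l2 m)).+1)%N.
  by apply: eq_bigr => m _; rewrite /l2 ffunE !lift0.
set S := (\sum_(m < d'.+1) _)%N.
by have -> : (a.+1 + (b.+1 + S) = a'.+1 + (b'.+1 + S))%N by lia.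
Qed.


Lemma sum_shift (g : 'I_N -> k) (i : nat) :
  \sum_(a < N) ((i == (nat_of_ord a).+1)%:R * g a) =
  if i is i'.+1 then (if (i' < N)%N then g (inord i') else 0) else 0.
Proof.
case: i => [|i']; first by rewrite big1 // => a _; rewrite mul0r.
rewrite -sum_ind; apply: eq_bigr => a _; by rewrite eqSS eq_sym.
Qed.

Lemma psiT_Hm u : (ps)^T *m Hm u = Hm u *m ps.
Proof.
apply/matrixP => i j; rewrite !mxE.
rewrite (eq_bigr (fun a : 'I_N => ((nat_of_ord i == (nat_of_ord a).+1)%:R * H u a j))); last first.
  by move=> a _; rewrite !mxE.
rewrite [RHS](eq_bigr (fun a : 'I_N => ((nat_of_ord j == (nat_of_ord a).+1)%:R * H u i a))); last first.
  by move=> a _; rewrite !mxE mulrC.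
rewrite !sum_shift.
have Hi := ltn_ord i; have Hj := ltn_ord j.
case Ei: (nat_of_ord i) => [|i']; case Ej: (nat_of_ord j) => [|j'] //.
- rewrite ifT; last by rewrite Ej in Hj; lia.
  by rewrite H_zero // inordK; lia.
- rewrite ifT; last by rewrite Ei in Hi; lia.
  by rewrite H_zero // inordK; lia.
- rewrite ifT; last by lia.
  rewrite ifT; last by lia.
  by apply: H_shift; rewrite !inordK; lia.
Qed.

Lemma Com_Hm (f : M) u : Com f -> f^T *m Hm u = Hm u *m f.
Proof.
move=> Hf.
have HX : forall t, (ps ^+ t)^T *m Hm u = Hm u *m ps ^+ t.
  elim=> [|t IH]; first by rewrite expr0 trmx1 mul1mx mulmx1.
  have E1 : ps ^+ t.+1 = ps *m ps ^+ t by rewrite exprS.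
  have E2 : ps ^+ t.+1 = ps ^+ t *m ps by rewrite exprSr.
  by rewrite {1}E1 trmx_mul -mulmxA psiT_Hm mulmxA IH -mulmxA -E2.
rewrite (ComT Hf) /Tm linear_sum /= mulmx_suml mulmx_sumr; apply: eq_bigr => t _.
by rewrite linearZ /= -scalemxAl -scalemxAr HX.
Qed.


Lemma prod_ind (j : {ffun 'I_D -> 'I_N}) (t : 'I_D -> 'I_N) :
  \prod_(m < D) ((j m == t m)%:R : k) = (j == [ffun m => t m])%:R.
Proof.
case: eqP => [->|ne]; first by rewrite big1 // => m _; rewrite ffunE eqxx.
have : ~~ [forall m, j m == t m].
  by apply/negP => /forallP Hm; apply: ne; apply/ffunP => m; rewrite ffunE; apply/eqP.
case/forallPn => m Hm; by rewrite (bigD1 m) //= (negbTE Hm) mul0r.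
Qed.

Lemma sum_pick (T : finType) (P : pred T) (j0 : T) :
  \sum_(j | P j) ((j == j0)%:R : k) = (P j0)%:R.
Proof.
rewrite big_mkcond (bigD1 j0) //= eqxx big1 ?addr0; first by case: (P j0).
by move=> j Hj; rewrite (negbTE Hj); case: (P j).
Qed.

Definition us (s : nat) : 'I_D -> CV :=
  fun m => ee (if nat_of_ord m == 2%N then inord (N.-1 - s) else inord N.-1).

Lemma H_us s (a b : 'I_N) : (s <= 1)%N -> H (us s) a b = ((a + b).+1 == N + s)%N%:R.
Proof.
move=> Hs.
set t' := fun m : 'I_D => if nat_of_ord m == 0%N then a else if nat_of_ord m == 1%N then b
  else if nat_of_ord m == 2%N then inord (N.-1 - s) else (inord N.-1 : 'I_N).
have Ew : forall m, ev (ee a) (ee b) (us s) m = ee (t' m).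
  by move=> m; rewrite /ev /us /t'; case: (nat_of_ord m == 0%N); case: (nat_of_ord m == 1%N).
rewrite /H (Theta_ext Ew) /Theta.
rewrite (eq_bigr (fun j : {ffun 'I_D -> 'I_N} => (j == [ffun m => t' m])%:R)); last first.
  move=> j _; rewrite -prod_ind; apply: eq_bigr => m _; by rewrite eeE.
rewrite sum_pick; congr (_ %:R).
rewrite big_ord_recl big_ord_recl big_ord_recl !ffunE /t' /=.
rewrite (eq_bigr (fun _ => N)); last first.
  by move=> m _; rewrite ffunE !lift0 /= inordK.
rewrite sum_constN inordK; last by lia.
rewrite CE; set P := (d' * N)%N.
by apply/eqP/eqP; lia.
Qed.

Lemma Cent_Com (f : M) : inCent D f -> Com f.
Proof.
move=> Hf.
have A0 := Cent_to (us 0) Hf; have A1 := Cent_to (us 1) Hf.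
set J0 := Hm (us 0) in A0; set J1 := Hm (us 1) in A1.
have EJ1 : J1 = J0 *m ps.
  apply/matrixP => a b; rewrite /J1 /J0 !mxE H_us //.
  rewrite (eq_bigr (fun t : 'I_N => ((nat_of_ord b == (nat_of_ord t).+1)%:R * H (us 0) a t))); last first.
    by move=> t _; rewrite !mxE mulrC.
  rewrite sum_shift; have Ha := ltn_ord a; have Hb := ltn_ord b.
  case Eb: (nat_of_ord b) => [|b'].
    by rewrite addn0 (_ : ((a.+1 == N + 1)%N) = false) //; apply/negbTE/eqP; lia.
  rewrite ifT; last by lia.
  rewrite H_us // inordK; last by lia.
  by congr (_ %:R); apply/eqP/eqP; lia.
have J1T : J1^T = J1.
  by apply/matrixP => a b; rewrite /J1 !mxE !H_us // addnC.
have J00 : J0 *m J0 = 1%:M.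
  apply/matrixP => a b; rewrite /J0 !mxE.
  rewrite (eq_bigr (fun t : 'I_N => ((nat_of_ord t == (N.-1 - a)%N)%:R * H (us 0) t b))); last first.
    move=> t _; rewrite !mxE H_us // addn0; congr (_ * _); congr (_ %:R).
    by have := ltn_ord a; have := ltn_ord t; move=> Ht Ha; apply/eqP/eqP; lia.
  rewrite sum_ind ifT; last by lia.
  rewrite H_us // inordK; last by lia.
  congr (_ %:R); have := ltn_ord a; have := ltn_ord b.
  by move=> Hb Ha; rewrite -val_eqE /=; lia.
have E : J0 *m (ps *m f) = J0 *m (f *m ps).
  by rewrite mulmxA -EJ1 -A1 EJ1 mulmxA A0 -mulmxA.
have := congr1 (mulmx J0) E; rewrite !mulmxA J00 !mul1mx.
by move=> H.
Qed.

Lemma CentE (f : M) : inCent D f <-> Com f.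
Proof.
split; first exact: Cent_Com.
by move=> Hf; apply: Cent_of => u; apply: Com_Hm.
Qed.


Lemma mG_inv (a : Rv) : @inGp k N a ->
  exists b : Rv, [/\ @inGp k N b, @mG k N a b = eG k N & @mG k N b a = eG k N].
Proof.
move=> Ha; have [b [Hb Eb]] := mG_inv_r Ha; have [c [Hc Ec]] := mG_inv_r Hb.
exists b; split => //.
have -> : a = c by rewrite -(mG_e_r a) -Ec -mG_assoc Eb mG_e_l.
exact: Ec.
Qed.

Lemma psi_nil : ps ^+ N = 0.
Proof.
apply/matrixP => r c; rewrite psiXE !mxE.
suff -> : (nat_of_ord c == (r + N)%N) = false by [].
by apply/negbTE/eqP => E; have := ltn_ord c; lia.
Qed.

Lemma psi_nz : ps ^+ N.-1 != 0.
Proof.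
apply/negP => /eqP E.
have := congr1 (fun A : M => A ord0 ord_max) E; rewrite psiXE !mxE /= add0n eqxx.
by move/eqP; rewrite oner_eq0.
Qed.

Lemma Com_col0 (g : M) (s : 'I_N) : Com g -> (0 < s)%N -> g s ord0 = 0.
Proof.
move=> Hg Hs; rewrite (ComT Hg) TmE big1 // => i _.
suff -> : (nat_of_ord (ord0 : 'I_N) == (s + i)%N) = false by rewrite mulr0.
by apply/negbTE/eqP => /= E; lia.
Qed.

Lemma Com_pow00 (g : M) i : Com g -> (g ^+ i) ord0 ord0 = g ord0 ord0 ^+ i.
Proof.
move=> Hg; elim: i => [|i IH]; first by rewrite !expr0 mxE.
rewrite exprSr -mulmxE mxE (bigD1 ord0) //= big1 ?addr0; first by rewrite IH exprSr.
by move=> s Hs; rewrite Com_col0 ?mulr0 // lt0n.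
Qed.

Lemma aut_char (s : M -> M) : is_alg_aut D s ->
  exists2 a : Rv, @inGp k N a & forall f, inCent D f -> Phi a f = s f.
Proof.
case=> [Hc [Hd [Hz [Hm [H1 [Hi Hs]]]]]].
have Hd' : forall f g, Com f -> Com g -> s (f + g) = s f + s g.
  by move=> f g /CentE Hf /CentE Hg; apply: Hd.
have Hz' : forall c f, Com f -> s (c *: f) = c *: s f by move=> c f /CentE; apply: Hz.
have Hm' : forall f g, Com f -> Com g -> s (f * g) = s f * s g.
  by move=> f g /CentE Hf /CentE Hg; apply: Hm.
have Cps : Com ps by apply: commr_refl.
have Cg : Com (s ps) by apply/CentE/Hc/CentE.
have C0 : Com 0 by apply: commr0.
have s0 : s 0 = 0 by have := Hz' 0 0 C0; rewrite !scale0r.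
have sX : forall i, s (ps ^+ i) = s ps ^+ i.
  elim=> [|i IH]; first by rewrite !expr0; apply: H1.
  by rewrite !exprS Hm' ?IH //; apply: Com_psiX.
set g := s ps in Cg sX.
have g00 : g ord0 ord0 = 0.
  have := Com_pow00 N Cg; rewrite -sX psi_nil s0 mxE /= => /esym/eqP.
  by rewrite expf_eq0 /= => /eqP.
set a : Rv := \row_i g ord0 (@succ_ord N i).
have Ra : R a = g by rewrite /a rho1_of.
exists a.
  rewrite inGpE; apply/negP => /eqP Ha0.
  have : g ^+ N.-1 = 0.
    apply: Com_row0; first exact: ComX.
    move=> c; rewrite -Ra; case: (ltnP c N.-1) => Hc'; first by rewrite (proj1 (tri a _)).
    have Ec : nat_of_ord c = N.-1 by have := ltn_ord c; lia.
    by rewrite (proj2 (tri a _)) // Ha0 expr0n.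
  rewrite -sX -s0 => /Hi E; apply/negP: psi_nz; rewrite negbK E //.
    by apply/CentE/Com_psiX.
  by apply/CentE.
move=> f /CentE Hf; rewrite PhiE_Com // Ra.
rewrite (hom_det Hd' Hz' Hm') //.
Qed.

End Part.

Theorem lemma4p4 (k : closedFieldType) (d n : nat) :
  [pchar k] =i pred0 -> (3 <= d)%N -> (2 <= n)%N ->
  (* G' is a group for m with neutral element e *)
  [/\ (forall a b : 'rV[k]_(n.-1), inGp a -> inGp b -> inGp (mG a b)),
      (forall a b c : 'rV[k]_(n.-1), inGp a -> inGp b -> inGp c ->
         mG (mG a b) c = mG a (mG b c)),
      inGp (eG k n),
      (forall a : 'rV[k]_(n.-1), inGp a -> mG (eG k n) a = a /\ mG a (eG k n) = a) &
      (forall a : 'rV[k]_(n.-1), inGp a -> exists b, [/\ inGp b, mG a b = eG k n & mG b a = eG k n])]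
  /\
  (* G' is isomorphic to the group of k-algebra automorphisms of Cent_k(n,d) *)
  exists Phi : 'rV[k]_(n.-1) -> ('M[k]_n -> 'M[k]_n),
    [/\ (forall a, inGp a -> is_alg_aut d (Phi a)),
        (forall a b, inGp a -> inGp b ->
           forall f, inCent d f -> Phi (mG a b) f = Phi a (Phi b f)),
        (forall a b, inGp a -> inGp b ->
           (forall f, inCent d f -> Phi a f = Phi b f) -> a = b) &
        (forall s : 'M[k]_n -> 'M[k]_n, is_alg_aut d s ->
           exists2 a, inGp a & forall f, inCent d f -> Phi a f = s f)].
Proof.
move=> _ Hd Hn.
case: d Hd => [|[|[|d']]] // _.
case: n Hn => [|[|n']] // _.
split.
  split.
  - by move=> a b; apply: mG_in.
  - by move=> a b c _ _ _; apply: mG_assoc.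
  - exact: e_in.
  - by move=> a _; split; [apply: mG_e_l | apply: mG_e_r].
  - by move=> a Ha; apply: mG_inv.
exists (@Phi k n'); split.
- move=> a Ha; have [b [Hb Eab Eba]] := mG_inv Ha.
  split; [|split; [|split; [|split; [|split; [|split]]]]].
  + by move=> f /CentE Hf; apply/CentE; apply: Com_Phi.
  + by move=> f g _ _; apply: PhiD.
  + by move=> c f _; apply: PhiZ.
  + by move=> f g /CentE Hf /CentE Hg; apply: PhiM.
  + exact: Phi1.
  + move=> f g /CentE Hf /CentE Hg E.
    by rewrite -(Phi_e Hf) -(Phi_e Hg) -Eba !Phi_mG // E.
  + move=> g /CentE Hg; exists (Phi b g); first by apply/CentE; apply: Com_Phi.
    by rewrite -Phi_mG // Eab Phi_e.
- by move=> a b _ _ f /CentE Hf; apply: Phi_mG.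
- move=> a b _ _ E; apply: rho1_inj.
  by rewrite -!Phi_psi; apply: E; apply/CentE; apply: commr_refl.
- by move=> s Hs; apply: aut_char.
Qed.
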